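(* Let $v=(x,y,z)\in S$ be a point with at least one irrational coordinate, and consider the subsequence of its itinerary consisting of the symbols not of type $\mathbb{A}$ (this subsequence may be empty, finite, or infinite). (i) The subsequence contains no symbol of type $\mathbb{C}$ before its first $\mathbb{B}$-type... more precisely: the non-$\mathbb{A}$ symbols of the itinerary alternate in type $\mathbb{B},\mathbb{C},\mathbb{B},\mathbb{C},\dots$ starting with type $\mathbb{B}$ (or there are none) if and only if $z=0$. (ii) The non-$\mathbb{A}$ symbols of the itinerary alternate in type $\mathbb{C},\mathbb{B},\mathbb{C},\mathbb{B},\dots$ starting with type $\mathbb{C}$ (or there are none) if and only if $y=z$.
   Context: Let $S = \{(x,y,z)\in\mathbb{R}^3 : 0\le z\le y\le x\le 1\}$; its faces $\{z=0\}$ and $\{y=z\}$ are called $\mathsf{AB}$ and $\mathsf{AC}$. For integers $n\ge1$ define $\mathbb{A}_n = \{\frac1{n+1} < x \le \frac1n,\ 0\le z\le y\le 1-nx\}$, $\mathbb{B}_n = \{0\le z\le 1-nx < y \le x\}$, $\mathbb{C}_n = \{1-nx < z \le y \le x \le \frac1n\}$; together with $\{(0,0,0)\}$ they partition $S$. The 3-dimensional Gauss map $G:S\to S$ is $G(0,0,0)=(0,0,0)$, $G(x,y,z)=\left(\frac1x-n,\frac yx,\frac zx\right)$ on $\mathbb{A}_n$, $G(x,y,z)=\left(\frac{1-y}{x}-n+1,\frac{x-y+z}{x},\frac{x-y}{x}\right)$ on $\mathbb{B}_n$, $G(x,y,z)=\left(\frac{1-z}{x}-n+1,\frac{x-z}{x},\frac{y-z}{x}\right)$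 on $\mathbb{C}_n$. For a point $v$ whose forward orbit never hits the origin (which holds whenever $v$ has an irrational coordinate), its itinerary is the sequence $\mathbb{X}_{a_1},\mathbb{X}_{a_2},\dots$ ($\mathbb{X}\in\{\mathbb{A},\mathbb{B},\mathbb{C}\}$, $a_k\ge1$) with $G^{k-1}(v)\in\mathbb{X}_{a_k}$; a symbol $\mathbb{X}_{a}$ is ''of type $\mathbb{X}$''. *)

(* Defs.v *)
From Stdlib Require Import Reals Lra QArith Qreals ClassicalEpsilon.
Open Scope R_scope.

Definition R3 : Type := (R * R * R)%type.

Definition inS (p : R3) : Prop :=
  let '(x, y, z) := p in 0 <= z /\ z <= y /\ y <= x /\ x <= 1.

Definition inA (n : nat) (p : R3) : Prop :=
  let '(x, y, z) := p in
  (1 <= n)%nat /\ inS p /\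
  1 / (INR n + 1) < x /\ x <= 1 / INR n /\ 0 <= z /\ z <= y /\ y <= 1 - INR n * x.

Definition inB (n : nat) (p : R3) : Prop :=
  let '(x, y, z) := p in
  (1 <= n)%nat /\ inS p /\
  0 <= z /\ z <= 1 - INR n * x /\ 1 - INR n * x < y /\ y <= x.

Definition inC (n : nat) (p : R3) : Prop :=
  let '(x, y, z) := p in
  (1 <= n)%nat /\ inS p /\
  1 - INR n * x < z /\ z <= y /\ y <= x /\ x <= 1 / INR n.

Definition GA (n : nat) (p : R3) : R3 :=
  let '(x, y, z) := p in (1 / x - INR n, y / x, z / x).
Definition GB (n : nat) (p : R3) : R3 :=
  let '(x, y, z) := p in ((1 - y) / x - INR n + 1, (x - y + z) / x, (x - y) / x).
Definition GC (n : nat) (p : R3) : R3 :=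
  let '(x, y, z) := p in ((1 - z) / x - INR n + 1, (x - z) / x, (y - z) / x).

Definition pickn (P : nat -> Prop) : nat := epsilon (inhabits 1%nat) P.

(* The 3-dimensional Gauss map G : S -> S (G(0,0,0) = (0,0,0); the value
   outside S is irrelevant and set to (0,0,0)). *)
Definition G (p : R3) : R3 :=
  if excluded_middle_informative (exists n, inA n p) then GA (pickn (fun n => inA n p)) p
  else if excluded_middle_informative (exists n, inB n p) then GB (pickn (fun n => inB n p)) p
  else if excluded_middle_informative (exists n, inC n p) then GC (pickn (fun n => inC n p)) p
  else (0, 0, 0).

(* orbit v k = G^k(v); the k-th point lies in the region of the (k+1)-th symbol. *)
Definition orbit (v : R3) (k : nat) : R3 := Nat.iter k G v.

Definition isB (p : R3) : Prop := exists n, inB n p.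
Definition isC (p : R3) : Prop := exists n, inC n p.
Definition nonA (p : R3) : Prop := isB p \/ isC p.

Definition irrational (r : R) : Prop := ~ exists q : Q, r = Q2R q.

Definition alternates_from (first : R3 -> Prop) (v : R3) : Prop :=
  (forall k, nonA (orbit v k) ->
     (forall j, (j < k)%nat -> ~ nonA (orbit v j)) -> first (orbit v k)) /\
  (forall i j, (i < j)%nat -> nonA (orbit v i) -> nonA (orbit v j) ->
     (forall l, (i < l < j)%nat -> ~ nonA (orbit v l)) ->
     (isB (orbit v i) /\ isC (orbit v j)) \/ (isC (orbit v i) /\ isB (orbit v j))).

(* Main.v *)
Require Import Defs.
From Stdlib Require Import Reals.
From Stdlib Require Import Lra Lia Psatz Classical ClassicalEpsilon ZArith.
Open Scope R_scope.

Definition px (p:R3) : R := fst (fst p).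
Definition py (p:R3) : R := snd (fst p).
Definition pz (p:R3) : R := snd p.

Lemma inS_eq p : inS p <-> (0 <= pz p /\ pz p <= py p /\ py p <= px p /\ px p <= 1).
Proof. destruct p as [[x y] z]; unfold px, py, pz; simpl; tauto. Qed.

Lemma uniq_n n m x : INR n * x <= 1 -> 1 < (INR n + 1) * x ->
  INR m * x <= 1 -> 1 < (INR m + 1) * x -> n = m.
Proof.
  intros H1 H2 H3 H4.
  assert (Hn := pos_INR n). assert (Hm := pos_INR m).
  assert (0 < x) by nra.
  destruct (lt_eq_lt_dec n m) as [[Hl|He]|Hl]; auto.
  - assert (INR n + 1 <= INR m) by (rewrite <- S_INR; apply le_INR; lia). nra.
  - assert (INR m + 1 <= INR n) by (rewrite <- S_INR; apply le_INR; lia). nra.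
Qed.

Lemma INR_ge1 n : (1 <= n)%nat -> 1 <= INR n.
Proof. intros; change 1 with (INR 1); apply le_INR; lia. Qed.

Lemma nbA n p : inA n p -> (1 <= n)%nat /\ INR n * px p <= 1 /\ 1 < (INR n + 1) * px p.
Proof.
  destruct p as [[x y] z]; unfold px, inA; simpl. intros (Hn & _ & H1 & H2 & _).
  pose proof (INR_ge1 _ Hn).
  assert (E1 : (INR n + 1) * (1 / (INR n + 1)) = 1) by (field; lra).
  assert (E2 : INR n * (1 / INR n) = 1) by (field; lra).
  split; [exact Hn|]. split; nra.
Qed.

Lemma nbB n p : inB n p -> (1 <= n)%nat /\ INR n * px p <= 1 /\ 1 < (INR n + 1) * px p.
Proof.
  destruct p as [[x y] z]; unfold px, inB; simpl. intros (Hn & _ & H1 & H2 & H3 & H4).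
  split; [exact Hn|]. split; nra.
Qed.

Lemma nbC n p : inC n p -> (1 <= n)%nat /\ INR n * px p <= 1 /\ 1 < (INR n + 1) * px p.
Proof.
  destruct p as [[x y] z]; unfold px, inC; simpl. intros (Hn & _ & H1 & H2 & H3 & H4).
  pose proof (INR_ge1 _ Hn).
  assert (E2 : INR n * (1 / INR n) = 1) by (field; lra).
  split; [exact Hn|]. split; nra.
Qed.

Lemma pickn_spec (Pr : nat -> Prop) n : Pr n -> (forall m, Pr m -> m = n) -> pickn Pr = n.
Proof. intros Hn Hu. apply Hu. unfold pickn. apply epsilon_spec. exists n; exact Hn. Qed.

Ltac uniq_tac H1 H2 nb1 nb2 :=
  destruct (nb1 _ _ H1) as (_&?&?); destruct (nb2 _ _ H2) as (_&?&?);
  eapply uniq_n; eauto.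

Lemma disjAB n m p : inA n p -> inB m p -> False.
Proof.
  intros H1 H2. assert (m = n) by uniq_tac H1 H2 nbA nbB. subst.
  destruct p as [[x y] z]; unfold inA, inB in *; simpl in *. lra.
Qed.
Lemma disjAC n m p : inA n p -> inC m p -> False.
Proof.
  intros H1 H2. assert (m = n) by uniq_tac H1 H2 nbA nbC. subst.
  destruct p as [[x y] z]; unfold inA, inC in *; simpl in *. lra.
Qed.
Lemma disjBC' n m p : inB n p -> inC m p -> False.
Proof.
  intros H1 H2. assert (m = n) by uniq_tac H1 H2 nbB nbC. subst.
  destruct p as [[x y] z]; unfold inB, inC in *; simpl in *. lra.
Qed.
Lemma disjBC p : isB p -> isC p -> False.
Proof. intros [n H1] [m H2]. eapply disjBC'; eauto. Qed.

Lemma G_A n p : inA n p -> G p = GA n p.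
Proof.
  intros H. unfold G.
  destruct (excluded_middle_informative (exists n, inA n p)) as [_|C]; [|exfalso; apply C; eauto].
  f_equal. apply pickn_spec; [exact H|]. intros m Hm. uniq_tac Hm H nbA nbA.
Qed.

Lemma G_B n p : inB n p -> G p = GB n p.
Proof.
  intros H. unfold G.
  destruct (excluded_middle_informative (exists n, inA n p)) as [[m Hm]|_];
    [exfalso; eapply disjAB; eauto|].
  destruct (excluded_middle_informative (exists n, inB n p)) as [_|C]; [|exfalso; apply C; eauto].
  f_equal. apply pickn_spec; [exact H|]. intros m Hm. uniq_tac Hm H nbB nbB.
Qed.

Lemma G_C n p : inC n p -> G p = GC n p.
Proof.
  intros H. unfold G.
  destruct (excluded_middle_informative (exists n, inA n p)) as [[m Hm]|_];
    [exfalso; eapply disjAC; eauto|].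
  destruct (excluded_middle_informative (exists n, inB n p)) as [[m Hm]|_];
    [exfalso; eapply disjBC'; eauto|].
  destruct (excluded_middle_informative (exists n, inC n p)) as [_|C]; [|exfalso; apply C; eauto].
  f_equal. apply pickn_spec; [exact H|]. intros m Hm. uniq_tac Hm H nbC nbC.
Qed.

Lemma G_none p : ~ (exists n, inA n p) -> ~ nonA p -> G p = (0,0,0).
Proof.
  intros HA Hn. unfold G.
  destruct (excluded_middle_informative (exists n, inA n p)) as [C|_]; [tauto|].
  destruct (excluded_middle_informative (exists n, inB n p)) as [C|_];
    [exfalso; apply Hn; left; exact C|].
  destruct (excluded_middle_informative (exists n, inC n p)) as [C|_];
    [exfalso; apply Hn; right; exact C|].
  reflexivity.
Qed.

Lemma stepA n p : inA n p ->
  0 < px p /\ 1 <= INR n /\ INR n * px p <= 1 /\ 1 < (INR n + 1) * px p /\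
  inS p /\ py p <= 1 - INR n * px p /\
  px p * px (G p) = 1 - INR n * px p /\ px p * py (G p) = py p /\ px p * pz (G p) = pz p.
Proof.
  intros H. destruct (nbA _ _ H) as (Hn & H1 & H2). pose proof (INR_ge1 _ Hn).
  assert (Hx : 0 < px p) by nra.
  rewrite (G_A _ _ H). destruct p as [[x y] z]. unfold px, py, pz in *; simpl in *.
  unfold inA in H. destruct H as (_ & HS & _ & _ & _ & _ & Hy).
  split; [lra|]. split; [lra|]. split; [lra|]. split; [lra|]. split; [exact HS|].
  split; [lra|]. repeat split; field; intro; lra.
Qed.

Lemma stepB n p : inB n p ->
  0 < px p /\ 1 <= INR n /\ INR n * px p <= 1 /\ 1 < (INR n + 1) * px p /\
  inS p /\ pz p <= 1 - INR n * px p /\ 1 - INR n * px p < py p /\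
  px p * px (G p) = 1 - py p - INR n * px p + px p /\
  px p * py (G p) = px p - py p + pz p /\ px p * pz (G p) = px p - py p.
Proof.
  intros H. destruct (nbB _ _ H) as (Hn & H1 & H2). pose proof (INR_ge1 _ Hn).
  assert (Hx : 0 < px p) by nra.
  rewrite (G_B _ _ H). destruct p as [[x y] z]. unfold px, py, pz in *; simpl in *.
  unfold inB in H. destruct H as (_ & HS & _ & Hz & Hy & _).
  split; [lra|]. split; [lra|]. split; [lra|]. split; [lra|]. split; [exact HS|].
  split; [lra|]. split; [lra|]. repeat split; field; intro; lra.
Qed.

Lemma stepC n p : inC n p ->
  0 < px p /\ 1 <= INR n /\ INR n * px p <= 1 /\ 1 < (INR n + 1) * px p /\
  inS p /\ 1 - INR n * px p < pz p /\
  px p * px (G p) = 1 - pz p - INR n * px p + px p /\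
  px p * py (G p) = px p - pz p /\ px p * pz (G p) = py p - pz p.
Proof.
  intros H. destruct (nbC _ _ H) as (Hn & H1 & H2). pose proof (INR_ge1 _ Hn).
  assert (Hx : 0 < px p) by nra.
  rewrite (G_C _ _ H). destruct p as [[x y] z]. unfold px, py, pz in *; simpl in *.
  unfold inC in H. destruct H as (_ & HS & Hz & _).
  split; [lra|]. split; [lra|]. split; [lra|]. split; [lra|]. split; [exact HS|].
  split; [lra|]. repeat split; field; intro; lra.
Qed.

Lemma ex_region p : inS p -> 0 < px p -> (exists n, inA n p) \/ isB p \/ isC p.
Proof.
  destruct p as [[x y] z]. rewrite inS_eq. unfold px, py, pz; simpl. intros (H0&H1&H2&H3) Hx.
  set (r := 1 / x).
  assert (Erx : r * x = 1) by (unfold r; field; lra).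
  assert (Hr : 1 <= r) by nra.
  destruct (archimed r) as [Hu1 Hu2].
  assert (Hup : (1 < up r)%Z) by (apply lt_IZR; lra).
  set (n := Z.to_nat (up r - 1)).
  assert (En : INR n = IZR (up r) - 1).
  { unfold n. rewrite INR_IZR_INZ, Z2Nat.id by lia. rewrite minus_IZR. reflexivity. }
  assert (Hn : (1 <= n)%nat) by (unfold n; lia).
  pose proof (INR_ge1 _ Hn).
  assert (B1 : INR n * x <= 1) by nra.
  assert (B2 : 1 < (INR n + 1) * x) by nra.
  assert (E1 : (INR n + 1) * (1 / (INR n + 1)) = 1) by (field; lra).
  assert (E2 : INR n * (1 / INR n) = 1) by (field; lra).
  assert (E3 : 1 / INR n * (INR n * x) = x) by (field; lra).
  assert (Hpn : 0 < 1 / INR n) by (apply Rdiv_lt_0_compat; lra).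
  assert (Hpn1 : 0 < 1 / (INR n + 1)) by (apply Rdiv_lt_0_compat; lra).
  assert (L1 : 1 / (INR n + 1) < x) by nra.
  assert (L2 : x <= 1 / INR n) by nra.
  destruct (Rle_dec y (1 - INR n * x)).
  - left. exists n. unfold inA, inS. repeat split; try lia; lra.
  - destruct (Rle_dec z (1 - INR n * x)).
    + right; left. exists n. unfold inB, inS. repeat split; try lia; lra.
    + right; right. exists n. unfold inC, inS. repeat split; try lia; lra.
Qed.

Lemma G_inS p : inS p -> inS (G p).
Proof.
  intros HS.
  destruct (classic (exists n, inA n p)) as [[n H]|HA].
  - destruct (stepA _ _ H) as (Hx&Hn&B1&B2&HS'&Hy&E1&E2&E3).
    rewrite inS_eq in HS' |- *. destruct HS' as (?&?&?&?).
    repeat split; nra.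
  - destruct (classic (isB p)) as [[n H]|HB].
    + destruct (stepB _ _ H) as (Hx&Hn&B1&B2&HS'&Hz&Hy&E1&E2&E3).
      rewrite inS_eq in HS' |- *. destruct HS' as (?&?&?&?).
      repeat split; nra.
    + destruct (classic (isC p)) as [[n H]|HC].
      * destruct (stepC _ _ H) as (Hx&Hn&B1&B2&HS'&Hz&E1&E2&E3).
        rewrite inS_eq in HS' |- *. destruct HS' as (?&?&?&?).
        repeat split; nra.
      * rewrite G_none; [|exact HA| intros [?|?]; auto].
        unfold inS; lra.
Qed.

Fixpoint P (v : R3) (k : nat) : R :=
  match k with O => 1 | S k' => P v k' * px (orbit v k') end.
Definition qa v k := P v k * pz (orbit v k).
Definition qb v k := P v k * (py (orbit v k) - pz (orbit v k)).

Lemma orbS v k : orbit v (S k) = G (orbit v k). Proof. reflexivity. Qed.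
Lemma PS v k : P v (S k) = P v k * px (orbit v k). Proof. reflexivity. Qed.

Lemma orbit_inS v : inS v -> forall k, inS (orbit v k).
Proof. intros HS k; induction k; [exact HS|]. rewrite orbS. apply G_inS; auto. Qed.

Lemma P_nonneg v : inS v -> forall k, 0 <= P v k.
Proof.
  intros HS k; induction k; simpl; [lra|].
  pose proof (orbit_inS v HS k) as H. rewrite inS_eq in H.
  apply Rmult_le_pos; [exact IHk|]. fold (px (orbit v k)). lra.
Qed.

Lemma qS_A v k n : inA n (orbit v k) -> qa v (S k) = qa v k /\ qb v (S k) = qb v k.
Proof.
  intros H. unfold qa, qb. rewrite PS, orbS.
  destruct (stepA _ _ H) as (_&_&_&_&_&_&_&Ey&Ez).
  set (p := orbit v k) in *. split.
  - rewrite <- Ez. ring.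
  - rewrite <- Ey, <- Ez. ring.
Qed.

Lemma qS_B v k : isB (orbit v k) -> qb v (S k) = qa v k.
Proof.
  intros [n H]. unfold qa, qb. rewrite PS, orbS.
  destruct (stepB _ _ H) as (_&_&_&_&_&_&_&_&Ey&Ez).
  set (p := orbit v k) in *.
  replace (P v k * px p * (py (G p) - pz (G p))) with
    (P v k * (px p * py (G p) - px p * pz (G p))) by ring.
  rewrite Ey, Ez. ring.
Qed.

Lemma qS_C v k : isC (orbit v k) -> qa v (S k) = qb v k.
Proof.
  intros [n H]. unfold qa, qb. rewrite PS, orbS.
  destruct (stepC _ _ H) as (_&_&_&_&_&_&_&Ey&Ez).
  set (p := orbit v k) in *.
  replace (P v k * px p * pz (G p)) with (P v k * (px p * pz (G p))) by ring.
  rewrite Ez. ring.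
Qed.

Lemma xpos v c k : inS v -> 0 < c -> (qa v k = c \/ qb v k = c) -> 0 < px (orbit v k).
Proof.
  intros HS Hc Hq. pose proof (orbit_inS v HS k) as HO. pose proof (P_nonneg v HS k) as HP.
  rewrite inS_eq in HO. destruct HO as (?&?&?&?). unfold qa, qb in Hq.
  destruct Hq; nra.
Qed.

Lemma pres v c k : inS v -> 0 < c -> (qa v k = c \/ qb v k = c) -> ~ nonA (orbit v k) ->
  qa v (S k) = qa v k /\ qb v (S k) = qb v k.
Proof.
  intros HS Hc Hq Hn.
  destruct (ex_region _ (orbit_inS v HS k) (xpos v c k HS Hc Hq)) as [[n H]|[H|H]].
  - eapply qS_A; eauto.
  - exfalso; apply Hn; left; exact H.
  - exfalso; apply Hn; right; exact H.
Qed.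

Lemma drop v c : inS v -> 0 < c -> (forall k, qa v k = c \/ qb v k = c) ->
  (forall k, isC (orbit v k) -> isC (orbit v (S k)) -> False) -> False.
Proof.
  intros HS Hc Hinv HCC.
  pose proof (orbit_inS v HS) as HO. pose proof (P_nonneg v HS) as HP.
  assert (HPZ : forall k, c <= P v k /\ c <= P v k * py (orbit v k) /\ 0 < px (orbit v k)).
  { intro k. pose proof (HO k) as HOk. pose proof (HP k) as HPk. rewrite inS_eq in HOk.
    destruct HOk as (?&?&?&?).
    pose proof (Hinv k) as Hq. unfold qa, qb in Hq. destruct Hq; repeat split; nra. }
  assert (Hstep : forall k, P v (S (S k)) <= P v k /\
                   (~ isC (orbit v k) -> P v (S (S k)) <= P v k - c)).
  { intro k. pose proof (HPZ (S k)) as [H1 _]. destruct (HPZ k) as (H2&H3&H4).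
    pose proof (HO k) as HOk. pose proof (HP k) as HPk.
    rewrite (PS v (S k)), (PS v k), orbS. rewrite (PS v k) in H1.
    set (p := orbit v k) in *.
    replace (P v k * px p * px (G p)) with (P v k * (px p * px (G p))) by ring.
    destruct (ex_region p HOk H4) as [[n H]|[[n H]|[n H]]].
    - destruct (stepA _ _ H) as (Hx&Hn&B1&B2&HS'&Hy&E1&E2&E3). rewrite E1.
      assert (0 <= (INR n - 1) * (P v k * px p)) by (apply Rmult_le_pos; lra).
      split; [|intros _]; nra.
    - destruct (stepB _ _ H) as (Hx&Hn&B1&B2&HS'&Hz&Hy&E1&E2&E3). rewrite E1.
      rewrite inS_eq in HS'.
      assert (0 <= P v k * ((INR n - 1) * px p)) by (apply Rmult_le_pos; [lra|apply Rmult_le_pos; lra]).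
      split; [|intros _]; nra.
    - destruct (stepC _ _ H) as (Hx&Hn&B1&B2&HS'&Hz&E1&E2&E3). rewrite E1.
      rewrite inS_eq in HS'.
      assert (0 <= P v k * ((INR n - 1) * px p)) by (apply Rmult_le_pos; [lra|apply Rmult_le_pos; lra]).
      assert (0 <= P v k * pz p) by (apply Rmult_le_pos; lra).
      split; [nra|]. intros Hnc; exfalso; apply Hnc; exists n; exact H. }
  assert (HD : forall k, P v (S (S k)) + P v (S (S (S k))) <= P v k + P v (S k) - c).
  { intro k. destruct (classic (isC (orbit v k))) as [Hc'|Hc'].
    - assert (Hn : ~ isC (orbit v (S k))) by (intro Hx; exact (HCC k Hc' Hx)).
      destruct (Hstep k) as [A1 _]. destruct (Hstep (S k)) as [_ A2]. specialize (A2 Hn). lra.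
    - destruct (Hstep k) as [_ A1]. destruct (Hstep (S k)) as [A2 _]. specialize (A1 Hc'). lra. }
  assert (HM : forall m, P v (2*m) + P v (S (2*m)) <= 2 - INR m * c).
  { induction m as [|m IH].
    - change (P v (2*0)) with 1. change (P v (S (2*0))) with (1 * px v).
      rewrite inS_eq in HS. simpl INR. lra.
    - replace (2 * S m)%nat with (S (S (2*m))) by lia. rewrite S_INR.
      specialize (HD (2*m)%nat). lra. }
  assert (Hp : 0 < 2 / c) by (apply Rdiv_lt_0_compat; lra).
  destruct (archimed (2 / c)) as [Hu _].
  set (m := Z.to_nat (up (2/c))).
  assert (Hm : INR m = IZR (up (2/c))).
  { unfold m. rewrite INR_IZR_INZ, Z2Nat.id; [reflexivity|]. apply le_IZR. lra. }
  specialize (HM m). pose proof (HP (2*m)%nat). pose proof (HP (S (2*m))).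
  assert (E : 2 / c * c = 2) by (field; lra). nra.
Qed.

Definition NB v k := forall j, (j < k)%nat -> ~ nonA (orbit v j).
Definition LastIs (T : R3 -> Prop) v k :=
  exists i, (i < k)%nat /\ T (orbit v i) /\ forall l, (i < l < k)%nat -> ~ nonA (orbit v l).

Lemma NB_ext v k : NB v k -> ~ nonA (orbit v k) -> NB v (S k).
Proof. intros H Hn j Hj. destruct (Nat.eq_dec j k); [subst; auto | apply H; lia]. Qed.
Lemma Last_ext T v k : LastIs T v k -> ~ nonA (orbit v k) -> LastIs T v (S k).
Proof.
  intros [i (Hi & HT & Hl)] Hn. exists i. split; [lia|split; auto].
  intros l Hl'. destruct (Nat.eq_dec l k); [subst; auto| apply Hl; lia].
Qed.
Lemma Last_new (T : R3 -> Prop) v k : T (orbit v k) -> LastIs T v (S k).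
Proof. intros H. exists k. split; [lia| split; auto]. intros l Hl; exfalso; lia. Qed.
Lemma Last_at T v i j : (i < j)%nat -> nonA (orbit v i) ->
  (forall l, (i < l < j)%nat -> ~ nonA (orbit v l)) -> (forall p, T p -> nonA p) ->
  LastIs T v j -> T (orbit v i).
Proof.
  intros Hij Hi Hb HTn [i' (Hi' & HT & Hl)].
  destruct (lt_eq_lt_dec i i') as [[H|H]|H].
  - exfalso. apply (Hb i'); [lia| apply HTn; exact HT].
  - subst; exact HT.
  - exfalso. apply (Hl i); [lia|exact Hi].
Qed.

Lemma fwd v (F0 F1 T0 T1 : R3 -> Prop) :
  (forall p, nonA p <-> T0 p \/ T1 p) ->
  (forall p, F0 p -> ~ nonA p -> F0 (G p)) ->
  (forall p, F1 p -> ~ nonA p -> F1 (G p)) ->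
  (forall p, F0 p -> T0 p -> F1 (G p)) ->
  (forall p, F1 p -> T1 p -> F0 (G p)) ->
  (forall p, F0 p -> ~ T1 p) ->
  (forall p, F1 p -> ~ T0 p) ->
  F0 v ->
  (forall k, nonA (orbit v k) -> (forall j, (j < k)%nat -> ~ nonA (orbit v j)) -> T0 (orbit v k)) /\
  (forall i j, (i < j)%nat -> nonA (orbit v i) -> nonA (orbit v j) ->
     (forall l, (i < l < j)%nat -> ~ nonA (orbit v l)) ->
     (T0 (orbit v i) /\ T1 (orbit v j)) \/ (T1 (orbit v i) /\ T0 (orbit v j))).
Proof.
  intros Hiff H0 H1 H01 H10 N0 N1 Hv.
  assert (Inv : forall k, (F0 (orbit v k) /\ (NB v k \/ LastIs T1 v k)) \/
                          (F1 (orbit v k) /\ LastIs T0 v k)).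
  { induction k as [|k IH].
    - left. split; [exact Hv| left; intros j Hj; exfalso; lia].
    - change (orbit v (S k)) with (G (orbit v k)).
      destruct (classic (nonA (orbit v k))) as [Hn|Hn].
      + destruct IH as [[HF _]|[HF _]].
        * assert (T0 (orbit v k)) by
            (destruct (proj1 (Hiff _) Hn) as [?|?]; [auto| exfalso; eapply N0; eauto]).
          right. split; [apply H01; auto| apply Last_new; auto].
        * assert (T1 (orbit v k)) by
            (destruct (proj1 (Hiff _) Hn) as [?|?]; [exfalso; eapply N1; eauto|auto]).
          left. split; [apply H10; auto| right; apply Last_new; auto].
      + destruct IH as [[HF [HN|HL]]|[HF HL]].
        * left. split; [apply H0; auto| left; apply NB_ext; auto].
        * left. split; [apply H0; auto| right; apply Last_ext; auto].
        * right. split; [apply H1; auto| apply Last_ext; auto]. }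
  split.
  - intros k Hn HN. destruct (Inv k) as [[HF _]|[HF HL]].
    + destruct (proj1 (Hiff _) Hn) as [?|?]; [auto| exfalso; eapply N0; eauto].
    + exfalso. destruct HL as [i (Hi & HT & _)]. apply (HN i Hi). apply Hiff; auto.
  - intros i j Hij Hi Hj Hb. destruct (Inv j) as [[HF [HN|HL]]|[HF HL]].
    + exfalso. exact (HN i Hij Hi).
    + right. split.
      * apply (Last_at T1 v i j Hij Hi Hb); [intros p Hp; apply Hiff; auto | exact HL].
      * destruct (proj1 (Hiff _) Hj) as [?|?]; [auto| exfalso; eapply N0; eauto].
    + left. split.
      * apply (Last_at T0 v i j Hij Hi Hb); [intros p Hp; apply Hiff; auto | exact HL].
      * destruct (proj1 (Hiff _) Hj) as [?|?]; [exfalso; eapply N1; eauto| auto].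
Qed.

Lemma phases v (c : R) (q0 q1 : nat -> R) (T0 T1 : R3 -> Prop) :
  (forall p, T0 p -> T1 p -> False) ->
  (forall p, nonA p <-> T0 p \/ T1 p) ->
  (forall k, q0 k = c -> ~ nonA (orbit v k) -> q0 (S k) = c) ->
  (forall k, q1 k = c -> ~ nonA (orbit v k) -> q1 (S k) = c) ->
  (forall k, q0 k = c -> T0 (orbit v k) -> q1 (S k) = c) ->
  (forall k, q1 k = c -> T1 (orbit v k) -> q0 (S k) = c) ->
  q0 O = c ->
  (forall k, nonA (orbit v k) -> (forall j, (j < k)%nat -> ~ nonA (orbit v j)) -> T0 (orbit v k)) ->
  (forall i j, (i < j)%nat -> nonA (orbit v i) -> nonA (orbit v j) ->
     (forall l, (i < l < j)%nat -> ~ nonA (orbit v l)) ->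
     (T0 (orbit v i) /\ T1 (orbit v j)) \/ (T1 (orbit v i) /\ T0 (orbit v j))) ->
  forall k, q0 k = c \/ q1 k = c.
Proof.
  intros Hx Hiff P0 P1 P01 P10 Hb A1 A2.
  assert (Inv : forall k, (q0 k = c /\ (NB v k \/ LastIs T1 v k)) \/ (q1 k = c /\ LastIs T0 v k)).
  { induction k as [|k IH].
    - left. split; [exact Hb| left; intros j Hj; exfalso; lia].
    - destruct (classic (nonA (orbit v k))) as [Hn|Hn].
      + destruct (proj1 (Hiff _) Hn) as [HT|HT]; destruct IH as [[Hq [HN|HL]]|[Hq HL]].
        * right. split; [apply P01; auto| apply Last_new; auto].
        * right. split; [apply P01; auto| apply Last_new; auto].
        * exfalso. destruct HL as [i (Hi & HTi & Hl)].
          destruct (A2 i k Hi (proj2 (Hiff _) (or_introl HTi)) Hn Hl) as [[? ?]|[? ?]]; eauto.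
        * exfalso. apply (Hx (orbit v k)); [apply A1; [exact Hn|exact HN]|exact HT].
        * exfalso. destruct HL as [i (Hi & HTi & Hl)].
          destruct (A2 i k Hi (proj2 (Hiff _) (or_intror HTi)) Hn Hl) as [[? ?]|[? ?]]; eauto.
        * left. split; [apply P10; auto| right; apply Last_new; auto].
      + destruct IH as [[Hq [HN|HL]]|[Hq HL]].
        * left. split; [apply P0; auto| left; apply NB_ext; auto].
        * left. split; [apply P0; auto| right; apply Last_ext; auto].
        * right. split; [apply P1; auto| apply Last_ext; auto]. }
  intro k. destruct (Inv k) as [[? _]|[? _]]; auto.
Qed.

Lemma cancel_x x a b : 0 < x -> x * a = x * b -> a = b.
Proof. intros. apply Rmult_eq_reg_l with x; [assumption| intro; lra]. Qed.

Lemma FA0 p : pz p = 0 -> ~ nonA p -> pz (G p) = 0.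
Proof.
  intros Hz Hn. destruct (classic (exists n, inA n p)) as [[n H]|HA].
  - destruct (stepA _ _ H) as (Hx&_&_&_&_&_&_&_&E3).
    apply (cancel_x (px p)); auto. rewrite E3, Hz. ring.
  - rewrite G_none; auto.
Qed.
Lemma FA1 p : py p = pz p -> ~ nonA p -> py (G p) = pz (G p).
Proof.
  intros Hz Hn. destruct (classic (exists n, inA n p)) as [[n H]|HA].
  - destruct (stepA _ _ H) as (Hx&_&_&_&_&_&_&E2&E3).
    apply (cancel_x (px p)); auto. rewrite E2, E3. exact Hz.
  - rewrite G_none; auto.
Qed.
Lemma FB p : pz p = 0 -> isB p -> py (G p) = pz (G p).
Proof.
  intros Hz [n H]. destruct (stepB _ _ H) as (Hx&_&_&_&_&_&_&_&E2&E3).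
  apply (cancel_x (px p)); auto. rewrite E2, E3, Hz. ring.
Qed.
Lemma FC p : py p = pz p -> isC p -> pz (G p) = 0.
Proof.
  intros Hz [n H]. destruct (stepC _ _ H) as (Hx&_&_&_&_&_&_&_&E3).
  apply (cancel_x (px p)); auto. rewrite E3, Hz. ring.
Qed.
Lemma noB p : py p = pz p -> ~ isB p.
Proof. intros E [n H]. destruct (stepB _ _ H) as (_&_&_&_&_&Hz&Hy&_). lra. Qed.
Lemma noC p : pz p = 0 -> ~ isC p.
Proof. intros E [n H]. destruct (stepC _ _ H) as (_&_&B1&_&_&Hz&_). lra. Qed.

Theorem mainTheorem16 (x y z : R) :
  inS (x, y, z) ->
  (irrational x \/ irrational y \/ irrational z) ->
  (alternates_from isB (x, y, z) <-> z = 0) /\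
  (alternates_from isC (x, y, z) <-> y = z).
Proof.
  intros HS _.
  assert (HS' := HS). unfold inS in HS'. destruct HS' as (Hz0 & Hzy & Hyx & Hx1).
  set (v := (x,y,z)) in *.
  split; split.
  - intros [A1 A2]. destruct (Req_dec z 0) as [|Hz]; [assumption|exfalso].
    assert (Hc : 0 < z) by lra.
    apply (drop v z HS Hc).
    + apply (phases v z (qa v) (qb v) isB isC).
      * exact disjBC.
      * intro p; unfold nonA; tauto.
      * intros k Hq Hn. destruct (pres v z k HS Hc (or_introl Hq) Hn) as [E _]. rewrite E; exact Hq.
      * intros k Hq Hn. destruct (pres v z k HS Hc (or_intror Hq) Hn) as [_ E]. rewrite E; exact Hq.
      * intros k Hq HB. rewrite qS_B; auto.
      * intros k Hq HC. rewrite qS_C; auto.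
      * unfold qa; simpl. unfold v, pz; simpl. ring.
      * exact A1.
      * exact A2.
    + intros k H1 H2.
      destruct (A2 k (S k)) as [[? ?]|[? ?]]; [lia|right; exact H1|right; exact H2| |eapply disjBC; eauto|eapply disjBC; eauto].
      intros l Hl; exfalso; lia.
  - intro Hz. apply (fwd v (fun p => pz p = 0) (fun p => py p = pz p) isB isC).
    + intro p; unfold nonA; tauto.
    + exact FA0.
    + exact FA1.
    + exact FB.
    + exact FC.
    + exact noC.
    + exact noB.
    + exact Hz.
  - intros [A1 A2]. destruct (Req_dec y z) as [|Hz]; [assumption|exfalso].
    assert (Hc : 0 < y - z) by lra.
    apply (drop v (y - z) HS Hc).
    + intro k. destruct (phases v (y - z) (qb v) (qa v) isC isB) with (k := k) as [?|?]; auto.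
      * intros p H1 H2; eapply disjBC; eauto.
      * intro p; unfold nonA; tauto.
      * intros k' Hq Hn. destruct (pres v (y - z) k' HS Hc (or_intror Hq) Hn) as [_ E]. rewrite E; exact Hq.
      * intros k' Hq Hn. destruct (pres v (y - z) k' HS Hc (or_introl Hq) Hn) as [E _]. rewrite E; exact Hq.
      * intros k' Hq HC. rewrite qS_C; auto.
      * intros k' Hq HB. rewrite qS_B; auto.
      * unfold qb; simpl. unfold v, py, pz; simpl. ring.
      * intros i j Hij Hi Hj Hb. destruct (A2 i j Hij Hi Hj Hb); tauto.
    + intros k H1 H2.
      destruct (A2 k (S k)) as [[? ?]|[? ?]]; [lia|right; exact H1|right; exact H2| |eapply disjBC; eauto|eapply disjBC; eauto].
      intros l Hl; exfalso; lia.
  - intro Hz. destruct (fwd v (fun p => py p = pz p) (fun p => pz p = 0) isC isB) as [F1 F2].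
    + intro p; unfold nonA; tauto.
    + exact FA1.
    + exact FA0.
    + exact FC.
    + exact FB.
    + exact noB.
    + exact noC.
    + exact Hz.
    + split; [exact F1|]. intros i j Hij Hi Hj Hb. destruct (F2 i j Hij Hi Hj Hb); tauto.
Qed.
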